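(* Let $I$ be an ESP instance, let $0<\varepsilon\le1$ and $\beta\ge1$, let $\sigma^*$ be an optimal feasible pattern for $I$ and $\sigma_\beta$ a feasible pattern with $L(\sigma_\beta)\le\beta L(\sigma^* )$. Set $\gamma=3/\varepsilon$, $a=\beta\gamma/\varepsilon$, and let $b$ be chosen uniformly at random in $[0,a]$. Define $t_i=e^{(i-2)a+b}$ for $i=1,2,\dots$, let $q$ be the smallest integer such that $L_v(\sigma_\beta)<t_{q+1}$ for all vertices $v$ visited by $\sigma_\beta$, and for $i\in[q]$ let $V_i=\{v \text{ visited by }\sigma_\beta: t_i\le L_v(\sigma_\beta)<t_{i+1}\}$ and $V_i^*=V_i\cap V^*$. For $i\in[q]$ let $I_i$ be the instance obtained from $I$ by setting the weights of all vertices outside $V_i$ to $0$, with objective $C'_i(\sigma)=\sum_{v\in V_i^*}w_v(\gamma t_i+L_v(\sigma))$ over patterns $\sigma$ feasible for $I_i$, and let $\sigma_i^*$ minimize $C'_i$. Then $$\mathbb{E}\Bigl[\sum_{i\in[q]}C'_i(\sigma_i^* )\Bigr]\le(1+\varepsilon)\,L(\sigma^* ),$$ where the expectation is over $b$.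
   Context: ESP: connected undirected graph $G=(V,E)$, root $r$, nonnegative edge lengths $\ell_e$, nonnegative integer weights $w_v$, $V^*=\{v:w_v>0\}$. An expanding search pattern is a sequence $\sigma=(e_1,\dots,e_m)$ of edges with $r\in e_1$ such that $\{e_1,\dots,e_i\}$ is a tree for every $i$; a vertex is visited by $\sigma$ if it is $r$ or an endpoint of some $e_i$; $\sigma$ is feasible (for an instance) if it visits all positive-weight vertices of that instance. For a visited $v\ne r$, $k_v=\min\{i:v\in e_i\}$, $k_r=0$, latency $L_v(\sigma)=\sum_{i\le k_v}\ell_{e_i}$; total latency $L(\sigma)=\sum_{v\in V^*}w_vL_v(\sigma)$. *)

(* Defs.v *)
From HB Require Import structures.
From mathcomp Require Import all_boot all_order all_algebra.
From mathcomp Require Import all_classical all_reals all_analysis.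
Set Implicit Arguments. Unset Strict Implicit. Unset Printing Implicit Defensive.
Import Order.TTheory GRing.Theory Num.Theory.
Local Open Scope ring_scope.

(* A (multi)graph: finite vertex type V, finite edge type E, each edge e has
   endpoints ends e (an unordered pair, stored as an ordered pair). *)
Section ESP.
Variables (R : realType) (V E : finType) (ends : E -> V * V).

Definition incident (e : E) (v : V) : bool :=
  (v == (ends e).1) || (v == (ends e).2).

Definition adj_in (F : {set E}) : rel V :=
  fun x y => [exists e in F, (ends e == (x, y)) || (ends e == (y, x))].

Definition span_of (F : {set E}) : {set V} :=
  [set v | [exists e in F, incident e v]].

Definition is_tree (F : {set E}) : bool :=
  [forall u in span_of F, forall v in span_of F, connect (adj_in F) u v]
  && (#|F|.+1 == #|span_of F|).

Definition connected_graph : Prop := forall u v : V, connect (adj_in [set: E]%SET) u v.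

Definition is_pattern (r : V) (s : seq E) : Prop :=
  (match s with [::] => True | e1 :: _ => incident e1 r end) /\
  (forall i : nat, (0 < i <= size s)%N -> is_tree [set e in take i s]).

Definition visited (r : V) (s : seq E) (v : V) : bool :=
  (v == r) || has (fun e => incident e v) s.

(* L_v(s) = sum of lengths of e_1..e_{k_v}, k_v first index (1-based) of an
   edge containing v; L_r = 0 *)
Definition latency (l : E -> R) (r : V) (s : seq E) (v : V) : R :=
  if v == r then 0
  else \sum_(e <- take (find (fun e => incident e v) s).+1 s) l e.

Definition total_latency (l : E -> R) (w : V -> nat) (r : V) (s : seq E) : R :=
  \sum_(v | (0 < w v)%N) (w v)%:R * latency l r s v.

Definition feasible (w : V -> nat) (r : V) (s : seq E) : Prop :=
  is_pattern r s /\ forall v, (0 < w v)%N -> visited r s v.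

Definition tpt (a b : R) (i : nat) : R := expR ((i%:R - 2) * a + b).

Definition in_layer (l : E -> R) (r : V) (sb : seq E) (a b : R) (i : nat)
  (v : V) : bool :=
  [&& visited r sb v, tpt a b i <= latency l r sb v
    & latency l r sb v < tpt a b i.+1].

Definition layer_weights (l : E -> R) (w : V -> nat) (r : V) (sb : seq E)
  (a b : R) (i : nat) : V -> nat :=
  fun v => if in_layer l r sb a b i v then w v else 0%N.

Definition layer_cost (l : E -> R) (w : V -> nat) (r : V) (sb : seq E)
  (gamma a b : R) (i : nat) (s : seq E) : R :=
  \sum_(v | in_layer l r sb a b i v && (0 < w v)%N)
     (w v)%:R * (gamma * tpt a b i + latency l r s v).

End ESP.

(* Main.v *)
Require Import Defs.
From HB Require Import structures.
From mathcomp Require Import all_boot all_order all_algebra.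
From mathcomp Require Import all_classical all_reals all_analysis.
From mathcomp Require Import ring lra zify measurable_realfun.
Import Order.TTheory GRing.Theory Num.Theory.
Local Open Scope ring_scope.

Module Helpers.
Import numFieldNormedType.Exports.
Local Open Scope classical_set_scope.
Local Open Scope ring_scope.
Section S.
Context {R : realType}.
Notation mu := (@lebesgue_measure R).

Lemma dexpc (c x : R) : derivable (fun y => expR (c + y)) x 1 /\
  ((fun y => expR (c + y))^`())%classic x = expR (c + x).
Proof.
have hf : derivable (fun y : R => c + y) x 1.
  by apply: derivableD => //; exact: derivable_id.
split.
  apply/derivable1_diffP. change (differentiable (expR \o (fun y => c + y)) x).
  apply: differentiable_comp; first exact/derivable1_diffP.
  exact/derivable1_diffP/derivable_expR.
change (((expR \o (fun y => c + y))^`())%classic x = expR (c + x)).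
have hg : derivable expR (c + x) 1 by exact: derivable_expR.
rewrite (derive1_comp hf hg).
rewrite derive1E (@derive_val _ _ _ _ _ _ _ (is_derive_expR _)).
have -> : ((fun y => c + y)^`())%classic x = 1.
  rewrite derive1E.
  have -> : (fun y => c + y) = (cst c + id)%R by apply/funext => y.
  rewrite deriveD //=.
  rewrite derive_id. rewrite (@derive_val _ _ _ _ _ _ _ (is_derive_cst _ _ _)). by rewrite add0r.
by rewrite mulr1.
Qed.

Lemma int_exp (c u v : R) : u <= v ->
  (\int[mu]_(x in `[u, v]) (expR (c + x))%:E = (expR (c + v) - expR (c + u))%:E)%E.
Proof.
rewrite le_eqVlt => /predU1P[<-|uv].
  by rewrite set_itv1 integral_set1 subrr.
have cf : continuous (fun y : R => expR (c + y)).
  move=> x; apply: continuous_comp; last exact: continuous_expR.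
  by apply: cvgD; [exact: cvg_cst|exact: cvg_id].
rewrite (@continuous_FTC2 _ _ (fun y => expR (c + y))) //.
- exact: continuous_subspaceT.
- split.
  + by move=> x _; case: (dexpc c x).
  + exact/cvg_at_right_filter/cf.
  + exact/cvg_at_left_filter/cf.
- by move=> x _; case: (dexpc c x).
Qed.

Definition kk (a x : R) : R := (Num.floor (ln x / a))%:~R.
Definition rr (a x : R) : R := ln x - kk a x * a.
Definition Hf (a x b : R) : R :=
  if 0 < x then (if b <= rr a x then expR (kk a x * a + b)
                 else expR ((kk a x - 1) * a + b)) else 0.

Lemma rr_bounds a x : 0 < a -> 0 <= rr a x < a.
Proof.
move=> a0; rewrite /rr /kk.
have h1 := floor_le (ln x / a); have h2 := floorD1_gt (ln x / a).
rewrite intrD in h2.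
have e : ln x = (ln x / a) * a by rewrite mulfVK // gt_eqF.
move: h1 h2 e; set y := ln x / a; set k := (Num.floor y)%:~R.
move=> h1 h2 e; rewrite [X in 0 <= X - _]e [X in X - _ < _]e.
have h2' : y < k + 1 by [].
apply/andP; split; nra.
Qed.

Lemma Hf_ge0 a x b : 0 <= Hf a x b.
Proof. by rewrite /Hf; case: ifP => _ //; case: ifP => _; exact: expR_ge0. Qed.

Lemma Hf_meas a x : measurable_fun setT (Hf a x).
Proof.
rewrite /Hf; case: (0 < x); last exact: measurable_cst.
have me (c : R) : measurable_fun setT (fun b : R => expR (c + b)).
  apply: continuous_measurable_fun => y; apply: continuous_comp; last exact: continuous_expR.
  by apply: cvgD; [exact: cvg_cst|exact: cvg_id].
apply: measurable_fun_ifT.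
- by apply: measurable_fun_ler; [exact: measurable_id|exact: measurable_cst].
- exact: me.
- exact: me.
Qed.

Lemma Hf_bound a x b (i : nat) : 0 < a -> 0 <= b ->
  expR ((i%:R - 2) * a + b) <= x -> expR ((i%:R - 2) * a + b) <= Hf a x b.
Proof.
move=> a0 b0 hx.
have x0 : 0 < x by apply: lt_le_trans hx; exact: expR_gt0.
have hm : (i%:R - 2) * a + b <= ln x by rewrite -ler_expR lnK.
have := rr_bounds a x a0; rewrite /Hf x0 /rr /kk.
set k := Num.floor (ln x / a).
have ei : (i%:R - 2 : R) = ((i%:Z - 2)%R)%:~R by rewrite intrB.
rewrite ei in hm *.
set n := (i%:Z - 2)%R in hm *.
move=> /andP[r0 ra].
case: ifP => hb; rewrite ler_expR lerD2r.
- rewrite ler_pM2r // ler_int floor_ge_int ler_pdivlMr //.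
  lra.
- have nk : (n < k)%R.
    rewrite ltNge; apply/negP => kn.
    have : k%:~R * a <= n%:~R * a :> R by rewrite ler_pM2r // ler_int.
    move/negbT: hb; rewrite -ltNge => hb. lra.
  have -> : (k%:~R - 1 : R) = (k - 1)%:~R by rewrite intrB.
  rewrite ler_pM2r // ler_int; lia.
Qed.

Lemma int_Hf (a x : R) : 0 < a ->
  (\int[mu]_(b in `[0%R, a]) (Hf a x b)%:E <= (Num.max x 0)%:E)%E.
Proof.
move=> a0.
have mH : measurable_fun setT (EFin \o Hf a x).
  by apply/measurable_EFinP; exact: Hf_meas.
have [x0|x0] := boolP (0 < x); last first.
  rewrite /Hf (negbTE x0) integral0 lee_fin le_max lexx orbT //.
have := rr_bounds a x a0; set r := rr a x; set k := kk a x => /andP[r0 ra].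
rewrite (@itv_bndbnd_setU _ _ _ (BRight r)); last 2 first.
  by rewrite bnd_simp.
  by rewrite bnd_simp ltW.
rewrite integral_setU //; last 2 first.
- exact: measurable_funS mH.
- rewrite /disj_set; apply/eqP/seteqP; split => y //=.
  rewrite !in_itv /= => -[/andP[_ h1] /andP[h2 _]]; lra.
have -> : (\int[mu]_(b in `[0%R, r]) (Hf a x b)%:E = \int[mu]_(b in `[0%R, r]) (expR (k * a + b))%:E)%E.
  apply: eq_integral.
  move=> y.
  by rewrite inE /= in_itv /= /Hf x0 => /andP[_ ->].
have -> : (\int[mu]_(b in `]r, a]) (Hf a x b)%:E = \int[mu]_(b in `]r, a]) (expR ((k - 1) * a + b))%:E)%E.
  apply: eq_integral.
  move=> y.
  by rewrite inE /= in_itv /= /Hf x0 => /andP[h _]; rewrite leNgt h.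
rewrite integral_itv_obnd_cbnd; last first.
  apply/measurable_EFinP; apply: measurable_funS (_ : measurable_fun setT _) => //.
  apply: continuous_measurable_fun => y; apply: continuous_comp; last exact: continuous_expR.
  by apply: cvgD; [exact: cvg_cst|exact: cvg_id].
rewrite (int_exp _ _ _ r0) (int_exp _ _ _ (ltW ra)) -EFinD lee_fin.
have -> : (k - 1) * a + a = k * a + 0 by ring.
have er : r = ln x - k * a by [].
have lx : expR (ln x) = x by rewrite lnK.
have -> : k * a + r = ln x by rewrite er; ring.
rewrite lx le_max; apply/orP; left.
have := expR_ge0 ((k - 1) * a + r). lra.
Qed.

Lemma le_int_nm (D : set R) (f g : R -> \bar R) :
  (forall x, D x -> (0 <= f x)%E) -> (forall x, D x -> (f x <= g x)%E) ->
  (\int[mu]_(x in D) f x <= \int[mu]_(x in D) g x)%E.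
Proof.
move=> f0 fg.
have g0 : forall x, D x -> (0 <= g x)%E.
  by move=> x Dx; exact: le_trans (f0 x Dx) (fg x Dx).
rewrite (ge0_integralE mu f0) (ge0_integralE mu g0) /=.
apply: ereal_sup_le => _ [h hf <-]; exists h => // x.
apply: le_trans (hf x) _; rewrite /patch; case: ifP => // /set_mem Dx.
exact: fg.
Qed.

Lemma sum_atmost1 (m n : nat) (P : nat -> bool) (c : nat -> R) (M : R) :
  0 <= M -> (forall i j, P i -> P j -> i = j) -> (forall i, P i -> c i <= M) ->
  \sum_(m <= i < n) (if P i then c i else 0) <= M.
Proof.
move=> M0 uP cM.
elim: n => [|n IH]; first by rewrite big_geq.
case: (leqP m n) => mn; last by rewrite big_geq.
rewrite big_nat_recr //=.
case: ifP => Pn; last by rewrite addr0.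
rewrite big_nat_cond big1 ?add0r ?cM // => i /andP[/andP[_ hi] _].
case: ifP => // Pi; move: (uP _ _ Pi Pn) => ein.
by rewrite ein ltnn in hi.
Qed.

Lemma tpt_uniq (a b x : R) i j : 0 < a ->
  tpt a b i <= x < tpt a b i.+1 -> tpt a b j <= x < tpt a b j.+1 -> i = j.
Proof.
move=> a0.
have mono k k' : (k.+1 <= k')%N -> tpt a b k.+1 <= tpt a b k'.
  move=> kk'; rewrite /tpt ler_expR lerD2r ler_pM2r // lerD2r ler_nat //.
move=> /andP[h1 h2] /andP[h3 h4].
case: (ltngtP i j) => // hij.
- have := mono _ _ hij; move=> h; have := lt_le_trans h2 h.
  by move=> h5; have := le_lt_trans h3 h5; rewrite ltxx.
- have := mono _ _ hij; move=> h; have := lt_le_trans h4 h.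
  by move=> h5; have := le_lt_trans h1 h5; rewrite ltxx.
Qed.
End S.
End Helpers.
Import Helpers.

Theorem lemma9 (R : realType) (V E : finType) (ends : E -> V * V) (r : V)
  (l : E -> R) (w : V -> nat) (eps beta : R) (sstar sbeta : seq E)
  (q : R -> nat) (sopt : R -> nat -> seq E) :
  connected_graph ends ->
  (forall e, 0 <= l e) ->
  0 < eps <= 1 -> 1 <= beta ->
  feasible ends w r sstar ->
  (forall s, feasible ends w r s ->
     total_latency ends l w r sstar <= total_latency ends l w r s) ->
  feasible ends w r sbeta ->
  total_latency ends l w r sbeta <= beta * total_latency ends l w r sstar ->
  let gamma := 3 / eps in
  let a := beta * gamma / eps in
  (* q b = smallest natural q with L_v(sbeta) < t_{q+1} for all visited v *)
  (forall b : R,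
     (forall v, visited ends r sbeta v -> latency ends l r sbeta v < tpt a b (q b).+1)
     /\ (forall n : nat,
          (forall v, visited ends r sbeta v -> latency ends l r sbeta v < tpt a b n.+1) ->
          (q b <= n)%N)) ->
  (* sopt b i = an optimal solution sigma_i^* of I_i w.r.t. C'_i *)
  (forall (b : R) (i : nat), (1 <= i <= q b)%N ->
     feasible ends (layer_weights ends l w r sbeta a b i) r (sopt b i) /\
     (forall s, feasible ends (layer_weights ends l w r sbeta a b i) r s ->
        layer_cost ends l w r sbeta gamma a b i (sopt b i)
        <= layer_cost ends l w r sbeta gamma a b i s)) ->
  ((a^-1)%:E *
     \int[lebesgue_measure]_(b in `[0%R, a]%classic)
        (\sum_(1 <= i < (q b).+1)
            layer_cost ends l w r sbeta gamma a b i (sopt b i))%:E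
   <= ((1 + eps) * total_latency ends l w r sstar)%:E)%E.
Proof.
move=> conn l0 /andP[eps0 eps1] beta1 fstar optstar fbeta Lbeta gamma a hq hopt.
set Ls := total_latency ends l w r sstar.
set Lb := total_latency ends l w r sbeta.
pose lat := fun v => latency ends l r sbeta v.
have lat0 s v : 0 <= latency ends l r s v.
  by rewrite /latency; case: ifP => _ //; apply: sumr_ge0 => e _; exact: l0.
have gamma0 : 0 < gamma by rewrite /gamma divr_gt0.
have beta0 : 0 < beta by apply: lt_le_trans ltr01 beta1.
have a0 : 0 < a by rewrite /a !divr_gt0 // mulr_gt0.
have Ls0 : 0 <= Ls by apply: sumr_ge0 => v _; apply: mulr_ge0 => //; exact: lat0.
pose G := fun b => Ls + gamma * \sum_v (w v)%:R * Hf a (lat v) b.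
pose F := fun b => \sum_(1 <= i < (q b).+1)
   layer_cost ends l w r sbeta gamma a b i (sopt b i).
have lc0 b i s : 0 <= layer_cost ends l w r sbeta gamma a b i s.
  apply: sumr_ge0 => v _; apply: mulr_ge0 => //; apply: addr_ge0; last exact: lat0.
  by apply: mulr_ge0; [exact: ltW|exact: expR_ge0].
have F0 b : 0 <= F b by apply: sumr_ge0 => i _.
have FG b : 0 <= b -> F b <= G b.
  move=> b0; rewrite /F.
  apply: (@le_trans _ _ (\sum_(1 <= i < (q b).+1)
     layer_cost ends l w r sbeta gamma a b i sstar)).
    rewrite big_nat_cond [X in _ <= X]big_nat_cond; apply: ler_sum => i /andP[hi _].
    rewrite ltnS in hi.
    have [_ ho] := hopt b i hi; apply: ho.
    case: fstar => fp fv; split => // v; rewrite /layer_weights.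
    by case: ifP => _ //; exact: fv.
  rewrite /layer_cost.
  under eq_bigr do rewrite big_mkcondl.
  rewrite exchange_big /=.
  apply: (@le_trans _ _ (\sum_(v | (0 < w v)%N)
     ((w v)%:R * latency ends l r sstar v + gamma * ((w v)%:R * Hf a (lat v) b)))).
    apply: ler_sum => v wv; apply: sum_atmost1.
    - apply: addr_ge0; first by apply: mulr_ge0 => //; exact: lat0.
      apply: mulr_ge0; first exact: ltW.
      by apply: mulr_ge0 => //; exact: Hf_ge0.
    - move=> i j /andP[_ hi] /andP[_ hj]; exact: tpt_uniq a0 hi hj.
    - move=> i /and3P[_ h1 _].
      have := @Hf_bound _ a (lat v) b i a0 b0 h1; rewrite -/(tpt a b i) => h.
      rewrite mulrDr addrC lerD2l mulrCA; apply: ler_wpM2l; first exact: ltW.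
      by apply: ler_wpM2l.
  rewrite big_split /= /G /Ls /total_latency lerD2l mulr_sumr.
  rewrite [X in _ <= X](bigID (fun v => (0 < w v)%N)) /= lerDl.
  apply: sumr_ge0 => v _; apply: mulr_ge0; first exact: ltW.
  by apply: mulr_ge0 => //; exact: Hf_ge0.
have mHf v : measurable_fun `[0%R, a]%classic (fun b => (Hf a (lat v) b)%:E).
  apply/measurable_EFinP; apply: measurable_funS (Hf_meas _ _) => //.
have Hf0 v b : 0 <= Hf a (lat v) b by exact: Hf_ge0.
have IF : (\int[lebesgue_measure]_(b in `[0%R, a]%classic) (F b)%:E
    <= \int[lebesgue_measure]_(b in `[0%R, a]%classic) (G b)%:E)%E.
  apply: le_int_nm => b; rewrite /= in_itv /= => /andP[b0 _].
    by rewrite lee_fin.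
  by rewrite lee_fin FG.
have IG : (\int[lebesgue_measure]_(b in `[0%R, a]%classic) (G b)%:E
    <= (Ls * a + gamma * \sum_v (w v)%:R * lat v)%:E)%E.
  have eG : (\int[lebesgue_measure]_(b in `[0%R, a]%classic) (G b)%:E
     = \int[lebesgue_measure]_(b in `[0%R, a]%classic)
         (Ls%:E + gamma%:E * \sum_v ((w v)%:R%:E * (Hf a (lat v) b)%:E)))%E.
    apply: eq_integral => b _; rewrite /G EFinD EFinM.
    by congr (_ + _ * _)%E; rewrite -sumEFin.
  have mS : measurable_fun `[0%R, a]%classic
      (fun b => \sum_v ((w v)%:R%:E * (Hf a (lat v) b)%:E))%E.
    apply: emeasurable_sum => v; exact: measurable_funeM.
  have S0 b : (0 <= \sum_v ((w v)%:R%:E * (Hf a (lat v) b)%:E))%E.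
    by apply: sume_ge0 => v _; rewrite -EFinM lee_fin mulr_ge0.
  rewrite eG ge0_integralD //; try by [exact: measurable_funeM | exact: measurable_cst
    | move=> b _; rewrite lee_fin | move=> b _; rewrite mule_ge0 // lee_fin ltW].
  have -> : (\int[lebesgue_measure]_(_ in `[0%R, a]%classic) Ls%:E = (Ls * a)%:E)%E.
    rewrite integral_cst //= lebesgue_measure_itv /= lte_fin a0 /=.
    by rewrite -EFinB subr0.
  rewrite ge0_integralZl_EFin //; last exact: ltW.
  rewrite ge0_integral_sum //; try by [move=> v b _; rewrite -EFinM lee_fin mulr_ge0
    | move=> v; exact: measurable_funeM].
  rewrite EFinD; apply: leeD2l; rewrite [X in (_ <= X)%E]EFinM; apply: lee_wpmul2l.
    by rewrite lee_fin ltW.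
  rewrite -sumEFin; apply: lee_sum => v _.
  rewrite ge0_integralZl_EFin //; try by [move=> b _; rewrite lee_fin | exact: mHf].
  rewrite EFinM; apply: lee_wpmul2l => //.
  apply: le_trans (@int_Hf _ a (lat v) a0) _.
  by rewrite lee_fin ge_max lexx lat0.
move=> v; apply: measurable_funeM; exact: mHf.
have ai0 : (0 <= (a^-1)%:E)%E by rewrite lee_fin invr_ge0 ltW.
apply: le_trans (lee_wpmul2l ai0 (le_trans IF IG)) _.
rewrite -EFinM lee_fin.
have SL : \sum_v (w v)%:R * lat v = Lb.
  rewrite /Lb /total_latency [LHS](bigID (fun v => (0 < w v)%N)) /= [X in _ + X]big1 ?addr0 //.
  by move=> v; rewrite lt0n negbK => /eqP ->; rewrite mul0r.
rewrite SL.
have an0 : a != 0 by rewrite gt_eqF.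
have bn0 : beta != 0 by rewrite gt_eqF.
have en0 : eps != 0 by rewrite gt_eqF.
have gn0 : gamma != 0 by rewrite gt_eqF.
have -> : a^-1 * (Ls * a + gamma * Lb) = Ls + eps / beta * Lb.
  rewrite /a; field.
  by rewrite bn0 en0 gn0.
have h1 : eps / beta * Lb <= eps / beta * (beta * Ls).
  by apply: ler_wpM2l => //; rewrite divr_ge0 // ltW.
have e2 : eps / beta * (beta * Ls) = eps * Ls by field.
rewrite e2 in h1.
lra.
Qed.
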